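(* Let $r\in\mathbb{N}^{\times}$ and $(\alpha_1,\dots,\alpha_r)\in(\mathbb{N}^{\times})^r$. Put $a_0=1$, $a_i=\alpha_i(a_0+\cdots+a_{i-1})$ for $1\le i\le r$, and $n=a_0+\cdots+a_r$. Then $\mathfrak p_s(a_0,\dots,a_r)$ is a Frobenius subalgebra of $\mathfrak{sl}(n)$.
   Context: All Lie algebras are over $\mathbb{C}$. The index of a Lie algebra $\mathfrak g$ is $\chi[\mathfrak g]=\min_{f\in\mathfrak g^*}\dim\{x\in\mathfrak g: f([x,y])=0\ \forall y\in\mathfrak g\}$; $\mathfrak g$ is Frobenius if its index is $0$. For a composition $(a_0,\dots,a_r)$ of $n$, $\mathfrak p(a_0,\dots,a_r)\subset\mathfrak{gl}(n)$ is the standard parabolic subalgebra of block upper triangular matrices with diagonal blocks of sizes $a_0,\dots,a_r$, and $\mathfrak p_s(a_0,\dots,a_r)=\mathfrak p(a_0,\dots,a_r)\cap\mathfrak{sl}(n)$. *)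

(* Defs.v *)
From HB Require Import structures.
From mathcomp Require Import all_boot all_algebra.
From mathcomp Require Import complex.
From mathcomp Require Import Rstruct.
Set Implicit Arguments. Unset Strict Implicit. Unset Printing Implicit Defensive.
Import GRing.Theory.
Local Open Scope ring_scope.

Definition C : numClosedFieldType := complex.complex Rdefinitions.R.

(* For a linear form f on gl(n) (every linear form on g is the restriction of
   such an f), the stabilizer  {x in g | f([x,y]) = 0 for all y in g}.
   Since y |-> f([x,y]) is linear, it suffices to test y on a basis of g. *)
Definition stab n (g : {vspace 'M[C]_n}) (f : 'Hom('M[C]_n, C^o)) :
    {vspace 'M[C]_n} :=
  (g :&: \bigcap_(y <- vbasis g)
           lker (linfun (fun x : 'M[C]_n => f (x *m y - y *m x))))%VS.

Definition is_index n (g : {vspace 'M[C]_n}) (d : nat) : Prop :=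
  (exists f : 'Hom('M[C]_n, C^o), \dim (stab g f) = d) /\
  (forall f : 'Hom('M[C]_n, C^o), (d <= \dim (stab g f))%N).

Definition frobenius n (g : {vspace 'M[C]_n}) : Prop := is_index g 0.

(* block index (0-based) of the row/column index i (0 <= i < sumn a) *)
Definition blk (a : seq nat) (i : nat) : nat :=
  count (fun k => (sumn (take k.+1 a) <= i)%N) (iota 0 (size a)).

(* p(a): block upper triangular matrices, i.e. A i j = 0 whenever the block of
   row i is strictly after the block of column j. *)
Definition parab (a : seq nat) : {vspace 'M[C]_(sumn a)} :=
  lker (linfun (fun A : 'M[C]_(sumn a) =>
     \matrix_(i, j) (if (blk a j < blk a i)%N then A i j else 0))).

Definition sl n : {vspace 'M[C]_n} :=
  lker (linfun (fun A : 'M[C]_n => (\tr A : C^o))).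

Definition parab_s (a : seq nat) : {vspace 'M[C]_(sumn a)} :=
  (parab a :&: sl (sumn a))%VS.

Fixpoint acomp (alpha : nat -> nat) (r : nat) : seq nat :=
  match r with
  | 0 => [:: 1%N]
  | r'.+1 => rcons (acomp alpha r') (alpha r'.+1 * sumn (acomp alpha r'))%N
  end.

(* Main.v *)
Require Import Defs.
From HB Require Import structures.
From mathcomp Require Import all_boot all_algebra zify.
Set Implicit Arguments. Unset Strict Implicit. Unset Printing Implicit Defensive.
Import GRing.Theory.
Local Open Scope ring_scope.
Definition sg (a : seq nat) (j : nat) : nat := (j - sumn (take (blk a j) a))%N.

Lemma blk_le a i : (blk a i <= size a)%N.
Proof. by rewrite /blk (leq_trans (count_size _ _)) // size_iota. Qed.

Lemma blk_rcons a m i : (i < sumn a + m)%N -> blk (rcons a m) i = blk a i.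
Proof.
move=> hi; rewrite /blk size_rcons -addn1 iotaD count_cat /= addn0.
have -> : (sumn (take (size a).+1 (rcons a m)) <= i)%N = false.
  by rewrite take_oversize ?size_rcons // sumn_rcons leqNgt hi.
rewrite addn0; apply: eq_in_count => k; rewrite mem_iota add0n => hk.
by rewrite -cats1 takel_cat.
Qed.

Lemma blk_big a i : (sumn a <= i)%N -> blk a i = size a.
Proof.
move=> hi; rewrite /blk; apply/eqP; rewrite -[X in _ == X](size_iota 0) -all_count.
apply/allP => k; rewrite mem_iota add0n => hk.
apply: leq_trans hi; rewrite -[X in (_ <= sumn X)%N](cat_take_drop k.+1) sumn_cat.
exact: leq_addr.
Qed.

Lemma blk_small a i : (i < sumn a)%N -> (blk a i < size a)%N.
Proof.
move=> hi; rewrite ltn_neqAle blk_le andbT; apply/negP => /eqP h.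
have : all (fun k => (sumn (take k.+1 a) <= i)%N) (iota 0 (size a)).
  by rewrite all_count size_iota; apply/eqP; exact: h.
case: a hi h => [//|x a'] hi h /allP /(_ (size a')).
rewrite mem_iota add0n /= ltnSn => /(_ isT).
by rewrite take_oversize // leqNgt hi.
Qed.

Lemma sg_rcons a m i : (i < sumn a + m)%N -> sg (rcons a m) i = sg a i.
Proof. by move=> hi; rewrite /sg blk_rcons // -cats1 takel_cat // blk_le. Qed.

Lemma sg_big a i : (sumn a <= i)%N -> sg a i = (i - sumn a)%N.
Proof. by move=> hi; rewrite /sg blk_big // take_size. Qed.

Lemma sg_le a i : (sg a i <= i)%N.
Proof. exact: leq_subr. Qed.
Definition EqA a (X : nat -> nat -> C) p q : Prop :=
  (if (0 < q)%N then X (sg a q) p else 0) =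
  \sum_(0 <= j < sumn a | (0 < j)%N && (sg a j == p)) X q j.
Definition HP a (X : nat -> nat -> C) := forall i j, (i < sumn a)%N -> (j < sumn a)%N ->
  (blk a j < blk a i)%N -> X i j = 0.
Definition HE a (X : nat -> nat -> C) := forall p q, (p < sumn a)%N -> (q < sumn a)%N ->
  (blk a p <= blk a q)%N -> EqA a X p q.

Lemma second_sum a' m (X : nat -> nat -> C) p q : (0 < sumn a')%N ->
  \sum_(sumn a' <= j < sumn (rcons a' m) | (0 < j)%N && (sg (rcons a' m) j == p)) X q j
  = if (p < m)%N then X q (p + sumn a')%N else 0.
Proof.
move=> N0; rewrite sumn_rcons -{1}[sumn a'](add0n) big_addn addKn big_nat_cond.
rewrite (eq_bigl (fun i => (i < m)%N && (i == p))); last first.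
  move=> i /=; case: (ltnP i m) => him /=; last by rewrite ?andbF.
  rewrite sg_rcons; last by lia.
  rewrite sg_big ?leq_addl // addnK.
  by rewrite (leq_trans N0 (leq_addl _ _)).
rewrite big_mkord.
case: (ltnP p m) => hpm.
  rewrite (big_pred1 (Ordinal hpm)) // => i /=.
  by rewrite ltn_ord /= -val_eqE.
rewrite big_pred0 // => i /=; rewrite ltn_ord /=; apply/eqP => hi.
by move: (ltn_ord i); rewrite hi ltnNge hpm.
Qed.
Lemma blk_cmp a' m i j : (i < sumn a')%N -> (sumn a' <= j)%N -> (j < sumn a' + m)%N ->
  (blk (rcons a' m) i < blk (rcons a' m) j)%N.
Proof.
move=> hi hj1 hj2; rewrite !blk_rcons //; last by lia.
by rewrite (blk_big hj1) blk_small.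
Qed.

Lemma blk_cmp2 a' m i j : (sumn a' <= j)%N -> (j < sumn a' + m)%N -> (i < sumn a' + m)%N ->
  (blk (rcons a' m) i <= blk (rcons a' m) j)%N.
Proof.
move=> hj1 hj2 hi; rewrite !blk_rcons //.
by rewrite (blk_big hj1) blk_le.
Qed.

Lemma shiftL a' al (X : nat -> nat -> C) :
  (0 < sumn a')%N -> (0 < al)%N ->
  HP (rcons a' (al * sumn a')%N) X -> HE (rcons a' (al * sumn a')%N) X ->
  forall i j, (i < al * sumn a')%N -> (j < sumn a' + al * sumn a')%N ->
  X i j = if (j + sumn a' < sumn a' + al * sumn a')%N
          then X (i + sumn a')%N (j + sumn a')%N else 0.
Proof.
set N := sumn a'; set a := rcons a' (al * N) => N0 al0 hP hE i j hi hj.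
have hn : sumn a = (N + al * N)%N by rewrite sumn_rcons.
have hq : (i + N < sumn a)%N by rewrite hn; lia.
have hj' : (j < sumn a)%N by rewrite hn.
have hb : (blk a j <= blk a (i + N))%N.
  by apply: blk_cmp2; rewrite -/N; lia.
have := hE j (i + N)%N hj' hq hb; rewrite /EqA.
have -> : (0 < i + N)%N by lia.
rewrite sg_rcons; last by lia.
rewrite sg_big ?leq_addl // addnK => ->.
rewrite (big_cat_nat _ (n:=N)) //=; last by rewrite hn leq_addr.
have -> : \sum_(0 <= k < N | (0 < k)%N && (sg a k == j)) X (i + N)%N k = 0.
  rewrite big_nat_cond big1 // => k /andP[/andP[_ hk] _]; apply: hP; rewrite ?hn //; try lia.
  by apply: blk_cmp; rewrite -/N //; lia.
rewrite add0r -/a second_sum //; congr (if _ then _ else _).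
lia.
Qed.
Lemma divDN x N : (0 < N)%N -> ((x + N) %/ N = (x %/ N).+1)%N.
Proof. by move=> N0; have := divnDMl 1 x N0; rewrite mul1n addn1. Qed.

Lemma modDN x N : ((x + N) %% N = x %% N)%N.
Proof. exact: modnDr. Qed.

Lemma Zlem a' al (X : nat -> nat -> C) :
  (0 < sumn a')%N -> (0 < al)%N ->
  HP (rcons a' (al * sumn a')%N) X -> HE (rcons a' (al * sumn a')%N) X ->
  forall k i j, (sumn a' + al * sumn a' - j <= k)%N ->
  (i < sumn a' + al * sumn a')%N -> (j < sumn a' + al * sumn a')%N ->
  (i %/ sumn a' < j %/ sumn a')%N -> X i j = 0.
Proof.
set N := sumn a' => N0 al0 hP hE k; elim: k => [|k IH] i j hk hi hj hij.
  lia.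
case: (ltnP i (al * N)) => hiN.
  rewrite (shiftL N0 al0 hP hE hiN hj).
  case: ifP => // hjN; apply: IH; try lia.
  by rewrite !divDN.
have h1 : (al <= i %/ N)%N by rewrite leq_divRL.
have h2 : (j %/ N < al.+1)%N by rewrite ltn_divLR // mulSn.
lia.
Qed.

Lemma Plem a' al (X : nat -> nat -> C) :
  (0 < sumn a')%N -> (0 < al)%N ->
  HP (rcons a' (al * sumn a')%N) X -> HE (rcons a' (al * sumn a')%N) X ->
  forall i j, (i < sumn a' + al * sumn a')%N -> (j < sumn a' + al * sumn a')%N ->
  X i j = ((i %/ sumn a')%N == (j %/ sumn a')%N)%:R * X (i %% sumn a')%N (j %% sumn a')%N.
Proof.
set N := sumn a' => N0 al0 hP hE i; elim/ltn_ind: i => i IH j hi hj.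
case: (ltnP i N) => hiN; case: (ltnP j N) => hjN.
  by rewrite !divn_small // !modn_small // eqxx mul1r.
  rewrite (Zlem N0 al0 hP hE (leqnn _) hi hj); last first.
    by rewrite divn_small // divn_gt0.
  have hjd : (0 < j %/ N)%N by rewrite divn_gt0.
  rewrite divn_small // (_ : (0 == j %/ N)%N = false) ?mul0r //; lia.
  have hid : (0 < i %/ N)%N by rewrite divn_gt0.
  rewrite hP ?sumn_rcons //; last by apply: blk_cmp; rewrite -/N //; lia.
  by rewrite [(j %/ N)%N]divn_small // (_ : (i %/ N == 0)%N = false) ?mul0r //; lia.
have [i' ei] : exists i', i = (i' + N)%N by exists (i - N)%N; lia.
have [j' ej] : exists j', j = (j' + N)%N by exists (j - N)%N; lia.
subst i j.
have hi' : (i' < al * N)%N by lia.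
rewrite -[X _ _]/(X (i' + N)%N (j' + N)%N).
have := shiftL N0 al0 hP hE hi' (_ : (j' < N + al * N)%N).
rewrite ifT; last by lia.
move=> <-; last by lia.
rewrite IH; last by lia.
  by rewrite !divDN // !modDN eqSS.
  lia.
lia.
Qed.
Lemma reduceHP a' al (X : nat -> nat -> C) :
  HP (rcons a' (al * sumn a')%N) X -> HP a' X.
Proof.
move=> hP i j hi hj hb; apply: hP; rewrite ?sumn_rcons; try lia.
by rewrite !blk_rcons //; lia.
Qed.

Lemma reduceHE a' al (X : nat -> nat -> C) :
  (0 < sumn a')%N -> (0 < al)%N ->
  HP (rcons a' (al * sumn a')%N) X -> HE (rcons a' (al * sumn a')%N) X -> HE a' X.
Proof.
set N := sumn a' => N0 al0 hP hE p q hp hq hb.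
have hp' : (p < sumn (rcons a' (al * N)%N))%N by rewrite sumn_rcons; lia.
have hq' : (q < sumn (rcons a' (al * N)%N))%N by rewrite sumn_rcons; lia.
have hb' : (blk (rcons a' (al * N)%N) p <= blk (rcons a' (al * N)%N) q)%N.
  by rewrite !blk_rcons -/N //; lia.
have := hE p q hp' hq' hb'; rewrite /EqA sg_rcons; last by rewrite -/N; lia.
move=> ->; rewrite (big_cat_nat _ (n:=N)) /=; last by rewrite sumn_rcons leq_addr.
  2: by [].
rewrite second_sum //.
have -> : (if (p < al * N)%N then X q (p + N)%N else 0) = 0.
  case: ifP => // hpa.
  apply: (Zlem N0 al0 hP hE (leqnn _)); rewrite -/N; first by lia.
    lia.
  by rewrite divDN // divn_small.
rewrite addr0 big_nat_cond [RHS]big_nat_cond; apply: eq_bigl => j.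
case: (ltnP j N) => hjN; rewrite ?andbF //= sg_rcons //.
rewrite -/N; lia.
Qed.
Lemma acomp_sum alpha r : (0 < sumn (acomp alpha r))%N.
Proof. by elim: r => //= r IH; rewrite sumn_rcons; lia. Qed.

Lemma core alpha r (X : nat -> nat -> C) :
  (forall i : nat, (1 <= i)%N -> (i <= r)%N -> (0 < alpha i)%N) ->
  HP (acomp alpha r) X -> HE (acomp alpha r) X ->
  forall i j, (i < sumn (acomp alpha r))%N -> (j < sumn (acomp alpha r))%N ->
  X i j = (i == j)%:R * X 0%N 0%N.
Proof.
elim: r => [|r IH] hal hP hE i j hi hj.
  move: hi hj => /= hi hj.
  have -> : i = 0%N by lia.
  have -> : j = 0%N by lia.
  by rewrite mul1r.
move: hP hE hi hj => /=; set a' := acomp alpha r; set al := alpha r.+1.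
have N0 : (0 < sumn a')%N by apply: acomp_sum.
have al0 : (0 < al)%N by apply: hal.
move=> hP hE; rewrite sumn_rcons => hi hj.
have hal' : forall i, (1 <= i)%N -> (i <= r)%N -> (0 < alpha i)%N.
  by move=> k h1 h2; apply: hal; lia.
have IH' := IH hal' (reduceHP hP) (reduceHE N0 al0 hP hE).
rewrite (Plem N0 al0 hP hE hi hj) IH'; try by apply: ltn_pmod.
rewrite mulrA -natrM; apply: (congr1 (fun b : nat => b%:R * X 0%N 0%N)).
case: (eqVneq i j) => [->|hne]; first by rewrite !eqxx.
case: eqP => hd; case: eqP => hm //=.
by case/eqP: hne; rewrite (divn_eq i (sumn a')) (divn_eq j (sumn a')) hd hm.
Qed.
Lemma lfunE_lin (K : fieldType) (aT rT : vectType K) (g : aT -> rT) :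
  linear g -> forall v, linfun g v = g v.
Proof.
move=> lg v.
pose gL : {linear aT -> rT} := HB.pack g (GRing.isLinear.Build K aT rT *:%R g lg).
exact: (lfunE gL v).
Qed.
Lemma parab_lin a : linear (fun A : 'M[C]_(sumn a) =>
     \matrix_(i, j) (if (blk a j < blk a i)%N then A i j else 0)).
Proof.
move=> k A B; apply/matrixP => i j; rewrite !mxE.
by case: ifP; rewrite ?mulr0 ?addr0.
Qed.

Lemma mem_parab a (A : 'M[C]_(sumn a)) :
  (A \in parab a) = [forall i : 'I_(sumn a), forall j : 'I_(sumn a), (blk a j < blk a i)%N ==> (A i j == 0)].
Proof.
rewrite /parab memv_ker lfunE_lin; last exact: parab_lin.
apply/eqP/forallP => [/matrixP h i|h]; first apply/forallP => j; last first.
  apply/matrixP => i j; rewrite !mxE; case: ifP => // hb.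
  by move/forallP: (h i) => /(_ j); rewrite hb => /eqP.
by have := h i j; rewrite !mxE; case: ifP => //= _ ->.
Qed.

Lemma tr_lin n : linear (fun A : 'M[C]_n => (\tr A : C^o)).
Proof. by move=> k A B; rewrite mxtraceD mxtraceZ. Qed.

Lemma mem_sl n (A : 'M[C]_n) : (A \in sl n) = (\tr A == 0).
Proof. by rewrite /sl memv_ker lfunE_lin //; exact: tr_lin. Qed.

Lemma one_parab a : (1%:M : 'M[C]_(sumn a)) \in parab a.
Proof.
rewrite mem_parab; apply/forallP => i; apply/forallP => j; apply/implyP => hb.
have ne : i != j by apply: contraTneq hb => ->; rewrite ltnn.
by rewrite mxE (negbTE ne).
Qed.

Lemma delta_parab a (p q : 'I_(sumn a)) : (blk a p <= blk a q)%N ->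
  (delta_mx p q : 'M[C]_(sumn a)) \in parab a.
Proof.
move=> hb; rewrite mem_parab; apply/forallP => i; apply/forallP => j; apply/implyP => hij.
rewrite mxE; case: (eqVneq i p) => [ei|] //=; case: (eqVneq j q) => [ej|] //=.
by move: hij; rewrite ei ej ltnNge hb.
Qed.

Lemma proj_parab_s a (y : 'M[C]_(sumn a)) : (0 < sumn a)%N -> y \in parab a ->
  y - (\tr y / (sumn a)%:R) *: 1%:M \in parab_s a.
Proof.
move=> n0 hy; rewrite /parab_s memv_cap; apply/andP; split.
  by rewrite memvB // memvZ // one_parab.
rewrite mem_sl raddfB /= mxtraceZ mxtrace1 divfK ?subrr //.
by rewrite Num.Theory.pnatr_eq0 -lt0n.
Qed.
Definition ext n (A : 'M[C]_n) (i j : nat) : C :=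
  match (insub i : option 'I_n), (insub j : option 'I_n) with
  | Some i', Some j' => A i' j'
  | _, _ => 0
  end.

Lemma ext_ord n (A : 'M[C]_n) (i j : 'I_n) : ext A i j = A i j.
Proof. by rewrite /ext !valK. Qed.

Lemma ext_nat n (A : 'M[C]_n) i j (hi : (i < n)%N) (hj : (j < n)%N) :
  ext A i j = A (Ordinal hi) (Ordinal hj).
Proof. by rewrite -ext_ord. Qed.

Lemma ext_mixl n (A : 'M[C]_n) i (hi : (i < n)%N) (q : 'I_n) : ext A i q = A (Ordinal hi) q.
Proof. by rewrite -(ext_ord A (Ordinal hi) q). Qed.

Lemma ext_mixr n (A : 'M[C]_n) (q : 'I_n) j (hj : (j < n)%N) : ext A q j = A q (Ordinal hj).
Proof. by rewrite -(ext_ord A q (Ordinal hj)). Qed.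

Lemma extD n (A B : 'M[C]_n) i j : ext (A + B) i j = ext A i j + ext B i j.
Proof. by rewrite /ext; case: (insub i : option 'I_n) => [?|]; case: (insub j : option 'I_n) => [?|] //; rewrite ?mxE ?addr0. Qed.

Lemma extB n (A B : 'M[C]_n) i j : ext (A - B) i j = ext A i j - ext B i j.
Proof. by rewrite /ext; case: (insub i : option 'I_n) => [?|]; case: (insub j : option 'I_n) => [?|] //; rewrite ?mxE ?subr0. Qed.

Lemma extZ n k (A : 'M[C]_n) i j : ext (k *: A) i j = k * ext A i j.
Proof. by rewrite /ext; case: (insub i : option 'I_n) => [?|]; case: (insub j : option 'I_n) => [?|] //; rewrite ?mxE ?mulr0. Qed.

Definition Fn a (A : 'M[C]_(sumn a)) : C^o :=
  \sum_(0 <= j < sumn a | (0 < j)%N) ext A (sg a j) j.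

Lemma Fn_lin a : linear (@Fn a).
Proof.
move=> k A B; have -> : forall v : C^o, k *: v = k * v by [].
rewrite /Fn mulr_sumr -big_split /=; apply: eq_bigr => j _.
by rewrite extD extZ.
Qed.

Lemma comm_lin n (f : 'Hom('M[C]_n, C^o)) y :
  linear (fun x : 'M[C]_n => f (x *m y - y *m x)).
Proof.
move=> k A B /=.
by rewrite mulmxDl mulmxDr -scalemxAl -scalemxAr opprD addrACA -scalerBr linearP.
Qed.

Lemma comm_lin2 n (f : 'Hom('M[C]_n, C^o)) x :
  linear (fun y : 'M[C]_n => f (x *m y - y *m x)).
Proof.
move=> k A B /=.
by rewrite mulmxDl mulmxDr -scalemxAl -scalemxAr opprD addrACA -scalerBr linearP.
Qed.

Lemma mem_bigcap_seq (vT : vectType C) (T : eqType) (s : seq T) (V : T -> {vspace vT}) x :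
  x \in (\bigcap_(y <- s) V y)%VS -> forall y, y \in s -> x \in V y.
Proof.
elim: s => // y s IH; rewrite big_cons memv_cap => /andP[h1 h2] z.
by rewrite in_cons => /orP[/eqP->|]; last exact: IH.
Qed.

Lemma sum_pick n q (F : nat -> C) : (q < n)%N ->
  \sum_(0 <= j < n) (if j == q then F j else 0) = F q.
Proof.
move=> hq; rewrite big_mkord (bigD1 (Ordinal hq)) // eqxx.
rewrite (eq_bigr (fun _ => 0)) ?big1_eq; first by rewrite /= addr0.
move=> k hk.
by rewrite (negbTE (hk : (val k != q))).
Qed.

Lemma ext_mxd n (x : 'M[C]_n) (p q : 'I_n) i j : (i < n)%N -> (j < n)%N ->
  ext (x *m delta_mx p q) i j = ext x i p * (j == q :> nat)%:R.
Proof.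
move=> hi hj; rewrite (ext_nat _ hi hj) (ext_mixl _ hi) mxE (bigD1 p) // big1.
  by rewrite /= addr0 mxE eqxx.
by move=> k /negbTE kp; rewrite mxE kp mulr0.
Qed.

Lemma ext_dmx n (x : 'M[C]_n) (p q : 'I_n) i j : (i < n)%N -> (j < n)%N ->
  ext (delta_mx p q *m x) i j = (i == p :> nat)%:R * ext x q j.
Proof.
move=> hi hj; rewrite (ext_nat _ hi hj) (ext_mixr _ _ hj) mxE (bigD1 q) // big1.
  by rewrite /= addr0 mxE eqxx andbT.
by move=> k /negbTE kp; rewrite mxE kp andbF mul0r.
Qed.
Lemma Fn_comm a (x : 'M[C]_(sumn a)) (p q : 'I_(sumn a)) :
  @Fn a (x *m delta_mx p q - delta_mx p q *m x) =
  (if (0 < q)%N then ext x (sg a q) p else 0) -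
  \sum_(0 <= j < sumn a | (0 < j)%N && (sg a j == p)) ext x q j.
Proof.
rewrite /Fn big_mkcond big_nat_cond.
rewrite (eq_bigr (fun j : nat => (if j == val q then (if (0 < j)%N then ext x (sg a j) p else 0) else 0)
   - (if (0 < j)%N && (sg a j == p) then ext x q j else 0))); last first.
  move=> j /andP[/andP[_ hj] _].
  case: (ltnP 0 j) => hj0 /=; last by case: (j == q :> nat); rewrite subr0.
  have hs : (sg a j < sumn a)%N by apply: leq_ltn_trans (sg_le a j) hj.
  rewrite extB ext_mxd // ext_dmx //.
  by case: (j == q :> nat); case: (sg a j == p :> nat); rewrite ?mulr1 ?mulr0 ?mul1r ?mul0r.
rewrite -big_nat_cond sumrB sum_pick //.
  by rewrite [in RHS]big_mkcond.
exact: ltn_ord.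
Qed.
Lemma stab0 alpha r :
  (forall i : nat, (1 <= i)%N -> (i <= r)%N -> (0 < alpha i)%N) ->
  stab (parab_s (acomp alpha r)) (linfun (@Fn (acomp alpha r))) = 0%VS.
Proof.
move=> hal.
set a := acomp alpha r; set g := parab_s a; set f := linfun (@Fn a).
have n0 : (0 < sumn a)%N by apply: acomp_sum.
apply/eqP; rewrite -subv0; apply/subvP => x; rewrite memv0 /stab memv_cap => /andP[xg xcap].
have hb : forall y, y \in vbasis g -> f (x *m y - y *m x) = 0.
  move=> y hy; have := mem_bigcap_seq xcap hy; rewrite memv_ker lfunE_lin; last exact: comm_lin.
  by move/eqP.
have hall : forall y, y \in g -> f (x *m y - y *m x) = 0.
  move=> y hy.
  have sub : (g <= lker (linfun (fun y => f (x *m y - y *m x))))%VS.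
    rewrite -(span_basis (vbasisP g)); apply/span_subvP => z hz.
    by rewrite memv_ker lfunE_lin ?hb //; exact: comm_lin2.
  move/subvP: sub => /(_ y hy); rewrite memv_ker lfunE_lin; last exact: comm_lin2.
  by move/eqP.
have [xp xsl] : x \in parab a /\ x \in sl (sumn a) by apply/memv_capP.
have hpar : forall y, y \in parab a -> f (x *m y - y *m x) = 0.
  move=> y hy; have := hall _ (proj_parab_s n0 hy).
  by rewrite mulmxBr mulmxBl -scalemxAr -scalemxAl mulmx1 mul1mx opprB addrA subrK.
have HPX : HP a (ext x).
  move=> i j hi hj hbk; rewrite ext_nat; move: xp; rewrite mem_parab.
  by move/forallP => /(_ (Ordinal hi)) /forallP /(_ (Ordinal hj)) /implyP /(_ hbk) /eqP.
have HEX : HE a (ext x).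
  move=> p q hp hq hbk; have := hpar _ (@delta_parab a (Ordinal hp) (Ordinal hq) hbk).
  rewrite /f lfunE_lin; last exact: Fn_lin.
  by rewrite Fn_comm => /eqP; rewrite subr_eq0 => /eqP h; exact: h.
have hc := core hal HPX HEX.
have xs : x = (ext x 0%N 0%N)%:M.
  by apply/matrixP => i j; rewrite mxE -ext_ord hc ?ltn_ord // mulr_natl.
move: xsl; rewrite mem_sl xs mxtrace_scalar Num.Theory.mulrn_eq0 (negbTE (lt0n_neq0 n0)) /= => /eqP ->.
by apply/eqP/matrixP => i j; rewrite !mxE mul0rn.
Qed.

Theorem mainTheorem9 (r : nat) (alpha : nat -> nat) :
  (0 < r)%N ->
  (forall i : nat, (1 <= i)%N -> (i <= r)%N -> (0 < alpha i)%N) ->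
  frobenius (parab_s (acomp alpha r)).
Proof.
move=> _ hal; split; last by [].
by exists (linfun (@Fn (acomp alpha r))); rewrite stab0 // dimv0.
Qed.
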